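(* Let $C=w-w-\dots-w$ be a chain with $m\ge 2$ edges all having the same weight $w>0$. Then $C$ is extremal, i.e. $L_1(C)=L_\emptyset(C)$.
   Context: For a chain $C'=v_1-\dots-v_r$ with $r\ge 2$ edges and positive weights: $L_1(C')=\max\{\sum_{i=1}^r v_ix_i : x\in\mathbb{R}^r,\ x_i^2+x_{i+1}^2\le 1\ \forall\,1\le i\le r-1\}$; the bare length is $L_\emptyset(C')=\sqrt{(\sum_{i\text{ odd}}v_i)^2+(\sum_{i\text{ even}}v_i)^2}$; $C'$ is extremal if $L_1(C')=L_\emptyset(C')$. *)

(* Defs.v *)
From HB Require Import structures.
From mathcomp Require Import all_boot all_order all_algebra.
From mathcomp Require Import boolp classical_sets reals.
Set Implicit Arguments. Unset Strict Implicit. Unset Printing Implicit Defensive.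
Import Order.TTheory GRing.Theory Num.Theory.
Local Open Scope ring_scope.
Local Open Scope classical_set_scope.

(* A chain v_1 - ... - v_r with r weights, encoded as v : 'I_r -> R
   (0-based: v i is the paper's v_{i+1}). *)

Definition chain_feasible (R : realType) (r : nat) (x : 'I_r -> R) : Prop :=
  forall i j : 'I_r, val j = (val i).+1 -> x i ^+ 2 + x j ^+ 2 <= 1.

(* L_1(C') = max { sum_i v_i x_i : x feasible }, taken as the supremum
   (the feasible set is compact, so the max exists and equals the sup). *)
Definition L1 (R : realType) (r : nat) (v : 'I_r -> R) : R :=
  sup [set s | exists x : 'I_r -> R, chain_feasible x /\ s = \sum_(i < r) v i * x i].

(* Bare length: sqrt((sum of odd-indexed v_i)^2 + (sum of even-indexed v_i)^2),
   1-based odd indices i correspond to 0-based even indices. *)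
Definition Lbare (R : realType) (r : nat) (v : 'I_r -> R) : R :=
  Num.sqrt ((\sum_(i < r | ~~ odd i) v i) ^+ 2 + (\sum_(i < r | odd i) v i) ^+ 2).

Definition extremal (R : realType) (r : nat) (v : 'I_r -> R) : Prop :=
  L1 v = Lbare v.

(* Main.v *)
Require Import Defs.
From mathcomp Require Import all_boot all_order all_algebra.
From mathcomp Require Import boolp classical_sets reals.
From mathcomp Require Import ring lra.
Import Order.TTheory GRing.Theory Num.Theory.
Set Implicit Arguments. Unset Strict Implicit.
Local Open Scope ring_scope.
Definition sP (R : realType) (P : pred nat) (F : nat -> R) n :=
  \sum_(0 <= i < n | P i) F i.

Lemma sP_S (R : realType) P (F : nat -> R) n :
  sP P F n.+1 = sP P F n + (if P n then F n else 0).
Proof. by rewrite /sP big_mkcond big_nat_recr //= -big_mkcond. Qed.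

Lemma sP0 (R : realType) P (F : nat -> R) : sP P F 0 = 0.
Proof. by rewrite /sP big_geq. Qed.

Definition feas (R : realType) n (y : nat -> R) :=
  forall i, (i.+1 < n)%N -> y i ^+ 2 + y i.+1 ^+ 2 <= 1.

Lemma feas_le (R : realType) n n' (y : nat -> R) : (n' <= n)%N -> feas n y -> feas n' y.
Proof. move=> h f i hi; apply: f; exact: leq_trans hi h. Qed.

Definition sq (R : realType) (y : nat -> R) := fun i => y i ^+ 2.

Lemma pairL (R : realType) (y : nat -> R) k :
  feas k.*2 y -> sP predT (sq y) k.*2 <= k%:R.
Proof.
elim: k => [|k IH] f; first by rewrite sP0.
rewrite doubleS !sP_S /= -natr1.
have := IH (feas_le (leqW (leqW (leqnn _))) f).
have := f k.*2; rewrite /sq; move=> /(_ (leqnn _)); lra.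
Qed.

Lemma split_sum (R : realType) (F : nat -> R) n :
  sP predT F n = sP (fun i => ~~ odd i) F n + sP odd F n.
Proof.
elim: n => [|n IH]; first by rewrite !sP0 addr0.
rewrite !sP_S IH /=; case: (odd n) => /=; lra.
Qed.

Lemma cnt_even (R : realType) k :
  sP (fun i => ~~ odd i) (fun _ => 1 : R) k.*2 = k%:R /\
  sP odd (fun _ => 1 : R) k.*2 = k%:R.
Proof.
elim: k => [|k [IH1 IH2]]; first by rewrite !sP0.
rewrite doubleS !sP_S IH1 IH2 /= odd_double /= -natr1; split; lra.
Qed.

Lemma cnt_odd (R : realType) k :
  sP (fun i => ~~ odd i) (fun _ => 1 : R) k.*2.+1 = k%:R + 1 /\
  sP odd (fun _ => 1 : R) k.*2.+1 = k%:R.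
Proof.
have [h1 h2] := cnt_even R k.
by rewrite !sP_S h1 h2 /= odd_double /= addr0.
Qed.

Lemma oddL (R : realType) (y : nat -> R) k :
  feas k.*2.+1 y ->
  k%:R * sP (fun i => ~~ odd i) (sq y) k.*2.+1 + (k%:R + 1) * sP odd (sq y) k.*2.+1
   <= k%:R * (k%:R + 1).
Proof.
elim: k => [|k IH] f.
    by rewrite !mul0r !add0r mul1r sP_S sP0 /= add0r.
have f' := feas_le (leqW (leqW (leqnn _))) f.
rewrite doubleS in f f' *.
have P := pairL (feas_le (leqW (leqnn _)) f : feas (k.+1).*2 y).
rewrite doubleS sP_S split_sum /= in P.
have F := f k.*2.+1 (leqnn _).
have IH' := IH f'.
rewrite !sP_S /= odd_double /= -!natr1 /sq in IH' P *.
set E := sP _ _ _ in IH' P *; set O := sP _ _ _ in IH' P *.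
have hk : 0 <= k%:R :> R by [].
nra.
Qed.

Lemma sP_ge0 (R : realType) P (F : nat -> R) n : (forall i, 0 <= F i) -> 0 <= sP P F n.
Proof. by move=> h; rewrite /sP sumr_ge0. Qed.

Lemma CS (R : realType) P (y : nat -> R) n :
  sP P y n ^+ 2 <= sP P (fun _ => 1) n * sP P (sq y) n.
Proof.
elim: n => [|n IH]; first by rewrite !sP0 expr0n mulr0.
rewrite !sP_S; case: (P n); last by rewrite !addr0.
have hB : 0 <= sP P (sq y) n by apply: sP_ge0 => i; exact: sqr_ge0.
have hc : 0 <= sP P (fun _ => 1 : R) n by apply: sP_ge0 => i; exact: ler01.
move: IH hB hc; rewrite /sq.
set A := sP P y n; set B := sP P (fun i => y i ^+ 2) n; set c := sP P (fun _ => 1) n; set z := y n.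
move=> IH hB hc.
have [c0|cp] := eqVneq c 0.
  have A0 : A = 0 by apply/eqP; rewrite -sqrf_eq0 eq_le sqr_ge0 andbT; move: IH; rewrite c0 mul0r.
  rewrite A0 c0; nra.
have cpos : 0 < c by rewrite lt_def cp hc.
have key : 0 <= c * (B + c * z ^+ 2 - 2 * A * z) by have := sqr_ge0 (A - c * z); nra.
have : 0 <= B + c * z ^+ 2 - 2 * A * z by rewrite -(pmulr_rge0 _ cpos).
nra.
Qed.

Lemma combine (R : realType) (ce co ev od E O : R) :
  0 < ce -> 0 < co -> ev ^+ 2 <= ce * E -> od ^+ 2 <= co * O ->
  co * E + ce * O <= ce * co -> ev + od <= Num.sqrt (ce ^+ 2 + co ^+ 2).
Proof.
move=> hce hco h1 h2 h3.
set u := ev / ce; set v := od / co.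
have eu : ev = ce * u by rewrite /u mulrC divfK // gt_eqF.
have ev' : od = co * v by rewrite /v mulrC divfK // gt_eqF.
rewrite eu ev' in h1 h2 *.
have hu : ce * u ^+ 2 <= E.
  have : ce * (ce * u ^+ 2) <= ce * E by rewrite mulrA -expr2 -exprMn.
  by rewrite ler_pM2l.
have hv : co * v ^+ 2 <= O.
  have : co * (co * v ^+ 2) <= co * O by rewrite mulrA -expr2 -exprMn.
  by rewrite ler_pM2l.
have huv : u ^+ 2 + v ^+ 2 <= 1.
  have : ce * co * (u ^+ 2 + v ^+ 2) <= ce * co by nra.
  have cc : 0 < ce * co by rewrite mulr_gt0.
  by rewrite -{2}(mulr1 (ce * co)) ler_pM2l.
have : (ce * u + co * v) ^+ 2 <= ce ^+ 2 + co ^+ 2.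
  have h4 := sqr_ge0 (ce * v - co * u).
  have h5 : 0 <= ce ^+ 2 + co ^+ 2 by rewrite addr_ge0 // sqr_ge0.
  have h6 : (ce ^+ 2 + co ^+ 2) * (u ^+ 2 + v ^+ 2) <= (ce ^+ 2 + co ^+ 2) * 1 by rewrite ler_wpM2l.
  have e : (ce * u + co * v) ^+ 2 = (ce ^+ 2 + co ^+ 2) * (u ^+ 2 + v ^+ 2) - (ce * v - co * u) ^+ 2 by ring.
  rewrite e; lra.
move=> /ler_wsqrtr; rewrite sqrtr_sqr => h.
exact: le_trans (ler_norm _) h.
Qed.

Lemma sP_eq (R : realType) (P : pred nat) (F G : nat -> R) n :
  (forall i, P i -> F i = G i) -> sP P F n = sP P G n.
Proof. by move=> h; rewrite /sP; apply: eq_bigr. Qed.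

Lemma sP_const (R : realType) (P : pred nat) (c : R) n :
  sP P (fun _ => c) n = c * sP P (fun _ => 1) n.
Proof. by rewrite /sP mulr_sumr; apply: eq_bigr => i _; rewrite mulr1. Qed.

Lemma quad (R : realType) M (y : nat -> R) : (2 <= M)%N -> feas M y ->
  let a := sP (fun i => ~~ odd i) (fun _ => 1) M in
  let b := sP odd (fun _ => 1) M in
  [/\ 0 < a, 0 < b &
   b * sP (fun i => ~~ odd i) (sq y) M + a * sP odd (sq y) M <= a * b].
Proof.
move=> hM f a b; rewrite /a /b {a b}.
move: hM f; rewrite -(odd_double_half M); set k := M./2; clearbody k.
case: (odd M) => /=; rewrite ?add0n ?add1n => hM f.
- have [h1 h2] := cnt_odd R k; rewrite h1 h2.
  have hk : (0 < k)%N by case: k hM {h1 h2 f}.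
  have hk' : 0 < k%:R :> R by rewrite ltr0n.
  have := oddL f.
  split; [lra | lra | nra].
- have [h1 h2] := cnt_even R k; rewrite h1 h2.
  have hk : (0 < k)%N by case: k hM {h1 h2 f}.
  have hk' : 0 < k%:R :> R by rewrite ltr0n.
  have := pairL f; rewrite split_sum => h.
  split; [lra | lra | nra].
Qed.

Theorem mainTheorem11 (R : realType) (m : nat) (w : R) :
  (2 <= m)%N -> 0 < w -> extremal (fun _ : 'I_m => w).
Proof.
move=> hm hw.
have hb : forall P : pred nat,
    \sum_(i < m | P i) w = w * sP P (fun _ => 1) m.
  by move=> P; rewrite /sP big_mkord mulr_sumr; apply: eq_bigr => i _; rewrite mulr1.
set a := sP (fun i => ~~ odd i) (fun _ => 1 : R) m.
set b := sP odd (fun _ => 1 : R) m.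
have hq : forall y : nat -> R, feas m y ->
   [/\ 0 < a, 0 < b &
   b * sP (fun i => ~~ odd i) (sq y) m + a * sP odd (sq y) m <= a * b].
  by move=> y f; exact: (quad hm f).
have f0 : feas m (fun _ => 0 : R) by move=> i _; rewrite expr0n /= addr0 ler01.
have [ha hb0 _] := hq _ f0.
set N := Num.sqrt (a ^+ 2 + b ^+ 2).
have hN0 : 0 < a ^+ 2 + b ^+ 2 by rewrite ltr_pwDl ?sqr_ge0 // exprn_gt0.
have hN : 0 < N by rewrite sqrtr_gt0.
have hNN : N ^+ 2 = a ^+ 2 + b ^+ 2 by rewrite sqr_sqrtr // ltW.
have eL : Lbare (fun _ : 'I_m => w) = w * N.
  rewrite /Lbare (hb (fun i => ~~ odd i)) (hb odd) -/a -/b /N !exprMn -mulrDr.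
  by rewrite sqrtrM ?sqr_ge0 // sqrtr_sqr gtr0_norm.
have ub : forall x : 'I_m -> R, chain_feasible x -> \sum_(i < m) w * x i <= w * N.
  move=> x hx.
  pose y := fun i : nat => if insub i is Some j then x j else 0.
  have fy : feas m y.
    move=> i hi; rewrite /y.
    have h1 : (i < m)%N := ltnW hi.
    rewrite (insubT (fun k => k < m)%N h1) (insubT (fun k => k < m)%N hi).
    exact: hx.
  have -> : \sum_(i < m) w * x i = w * sP predT y m.
    by rewrite /sP big_mkord mulr_sumr; apply: eq_bigr => i _; rewrite /y valK.
  rewrite ler_pM2l // split_sum.
  have [_ _ h] := hq y fy.
  apply: (combine (E := sP (fun i => ~~ odd i) (sq y) m) (O := sP odd (sq y) m)) => //; [rewrite /a | rewrite /b]; exact: CS.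
rewrite /extremal eL; apply/eqP; rewrite eq_le; apply/andP; split.
  apply: ge_sup.
    by exists (\sum_(i < m) w * 0), (fun _ => 0); split => // i j _; rewrite expr0n /= addr0 ler01.
  by move=> s [x [hx ->]]; exact: ub.
pose x' := fun i : nat => if odd i then b / N else a / N.
have fx : chain_feasible (fun i : 'I_m => x' i).
  move=> i j ->; rewrite /x' /=; case: (odd i) => /=;
  rewrite !expr_div_n hNN ?[b ^+ 2 / _ + _]addrC -mulrDl mulfV // gt_eqF //.
apply: (ub_le_sup _); last first.
  exists (fun i : 'I_m => x' i); split => //.
  rewrite -mulr_sumr.
  have -> : \sum_(i < m) x' i = sP predT x' m by rewrite /sP big_mkord.
  rewrite split_sum (sP_eq (G := fun _ => a / N)) ?(sP_eq (P := odd) (G := fun _ => b / N)); last first.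
  - by move=> i; rewrite /x'; case: (odd i).
  - by move=> i; rewrite /x'; case: (odd i).
  rewrite (sP_const _ (a / N)) (sP_const _ (b / N)) -/a -/b; congr (w * _).
  by apply/esym; rewrite (mulrAC a) (mulrAC b) -!expr2 -mulrDl -hNN expr2 mulfK // gt_eqF.
by exists (w * N); move=> s [x [hx ->]]; exact: ub.
Qed.
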